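(* Let $X,Y$ be Banach spaces, let $F:X\rightrightarrows Y$ be a closed convex set-valued mapping, let $A\subset X$ be a closed convex set, let $\bar y\in Y$, put $S:=F^{-1}(\bar y)\cap A$, and let $\bar x\in S$. Suppose there exist a closed convex cone $K\subset X$ and a neighborhood $V$ of $\bar x$ such that $S\cap V=(\bar x+K)\cap V$. Then $$\frac{1}{{\rm subreg}_AF(\bar x,\bar y)}=\sup\{\eta>0:\ DF^{-1}(\bar y,\bar x)(\eta_1B_Y)\cap(T(A,\bar x)+\eta_2B_X)\subset T(S,\bar x)+B_X\ \text{for all }\eta_1,\eta_2\ge0\text{ with }\eta_1+\eta_2<\eta\}.$$
   Context: $B_X,B_Y$ are the closed unit balls; $B(x,\delta)$ is the open ball. $F$ closed convex means ${\rm gph}(F)=\{(x,y):y\in F(x)\}$ is closed and convex in $X\times Y$. For a closed convex set $C$ and $a\in C$, the contingent cone $T(C,a)$ is the set of $v$ for which there exist $v_n\to v$, $t_n\to0^+$ with $a+t_nv_n\in C$ for all $n$. For $(x,y)\in{\rm gph}(F)$, $DF^{-1}(y,x)(v):=\{u\in X:(u,v)\in T({\rm gph}(F),(x,y))\}$ and $DF^{-1}(y,x)(W)=\bigcup_{v\in W}DF^{-1}(y,x)(v)$ for $W\subset Y$. ${\rm subreg}_AF(\bar x,\bar y):=\inf\{\tau>0:\exists\delta>0$ such that $d(x,S)\le\tau(d(\bar y,F(x))+d(x,A))$ for all $x\in B(\bar x,\delta)\}$, with $\inf\emptyset=+\infty$, $\sup\emptyset=0$, $1/(+\infty)=0$,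 $1/0=+\infty$. *)

(* Defs.v *)
From HB Require Import structures.
From mathcomp Require Import all_boot all_order all_algebra.
From mathcomp Require Import all_classical all_reals all_analysis.
Set Implicit Arguments. Unset Strict Implicit. Unset Printing Implicit Defensive.
Import Order.TTheory GRing.Theory Num.Theory.
Import numFieldNormedType.Exports.
Local Open Scope classical_set_scope.
Local Open Scope ring_scope.

Definition gph {X Y : Type} (F : X -> set Y) : set (X * Y) :=
  [set p | F p.1 p.2].

Definition is_cone_set {R : realType} {V : lmodType R} (K : set V) : Prop :=
  forall (t : R) k, 0 <= t -> K k -> K (t *: k).

Definition contingent {R : realType} {V : normedModType R} (C : set V) (a : V)
  : set V :=
  [set v | exists (vn : nat -> V) (tn : nat -> R),
     vn @ \oo --> v /\ tn @ \oo --> (0 : R) /\ (forall n, 0 < tn n) /\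
     (forall n, C (a + tn n *: vn n))].

Definition DFinv {R : realType} {X Y : normedModType R} (F : X -> set Y)
  (y : Y) (x : X) (W : set Y) : set X :=
  [set u | exists v, W v /\ contingent (gph F) (x, y) (u, v)].

Definition cball0 {R : realType} {V : normedModType R} (r : R) : set V :=
  [set v | `|v| <= r].

Definition minksum {R : realType} {V : normedModType R} (P Q : set V) : set V :=
  [set w | exists p q, P p /\ Q q /\ w = p + q].

(* distance d(x,C) in \bar R, with inf of the empty set = +oo *)
Definition edist {R : realType} {V : normedModType R} (x : V) (C : set V)
  : \bar R := ereal_inf [set (`|x - c|)%:E | c in C].

(* subreg_A F(xb,yb), an extended real, inf of empty set = +oo *)
Definition subreg {R : realType} {X Y : normedModType R} (F : X -> set Y)
  (A : set X) (xb : X) (yb : Y) : \bar R :=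
  let S := [set x | F x yb /\ A x] in
  ereal_inf [set τ%:E | τ in [set τ : R | 0 < τ /\
     exists δ : R, 0 < δ /\ forall x, `|x - xb| < δ ->
       (edist x S <= τ%:E * (edist yb (F x) + edist x A))%E]].

(* 1/r on \bar R with 1/(+oo) = 0 and 1/0 = +oo *)
Definition einv {R : realType} (r : \bar R) : \bar R :=
  match r with
  | +oo%E => 0%E
  | (x%:E)%E => if x == 0 then +oo%E else (x^-1)%:E
  | -oo%E => 0%E
  end.

(* sup with the convention sup of the empty set = 0 *)
Definition esup0 {R : realType} (E : set (\bar R)) : \bar R :=
  if pselect (E = set0) then 0%E else ereal_sup E.

(* Main.v *)
Require Import Defs.
From HB Require Import structures.
From mathcomp Require Import all_boot all_order all_algebra.
From mathcomp Require Import all_classical all_reals all_analysis.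
From mathcomp Require Import ring lra.
Import Order.TTheory GRing.Theory Num.Theory.
Import numFieldNormedType.Exports.
Local Open Scope classical_set_scope.
Local Open Scope ring_scope.

Lemma seg_tangent (R : realType) (X : normedModType R) (C : set X) c0 v t0 :
  0 < t0 -> (forall t, 0 < t -> t <= t0 -> C (c0 + t *: v)) -> contingent C c0 v.
Proof.
move=> t00 H; exists (fun _ => v), (fun n => t0 * n.+1%:R^-1).
split; first exact: cvg_cst.
split.
  rewrite -(mulr0 t0); apply: cvgMr; exact: (@cvg_harmonic R).
split=> [n|n]; first by rewrite mulr_gt0 // invr_gt0 ltr0Sn.
apply: H; first by rewrite mulr_gt0 // invr_gt0 ltr0Sn.
apply: ler_piMr; first exact: ltW.
by rewrite invf_le1 ?ltr0Sn // ler1n.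
Qed.

Lemma conv_tangent (R : realType) (M : normedModType R)
  (C : set (convex_lmodType M)) (c0 c : M) (a : R) :
  convex_set C -> C c0 -> C c -> 0 < a -> contingent C c0 (a *: (c - c0)).
Proof.
move=> cC Cc0 Cc a0.
apply: (@seg_tangent _ _ _ _ _ a^-1); first by rewrite invr_gt0.
move=> t t0 ta.
have l0 : 0 <= t * a by rewrite mulr_ge0 // ltW.
have l1 : t * a <= 1 by rewrite -(mulVf (lt0r_neq0 a0)) ler_pM2r.
have := cC c c0 (Itv01 l0 l1) (mem_set Cc) (mem_set Cc0).
rewrite inE /=.
suff -> : conv (Itv01 l0 l1) (c : convex_lmodType M) (c0 : convex_lmodType M) = c0 + t *: (a *: (c - c0)) :> M by [].
rewrite /conv /= /unstable.onem scalerA scalerBr scalerBl scale1r.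
by rewrite addrC -addrA [_ + (_ *: c)]addrC.
Qed.


Lemma K_sub_T (R : realType) (X : normedModType R) (S K : set X) xb d0 :
  0 < d0 -> is_cone_set K ->
  (forall z, `|z - xb| < d0 -> (S z <-> K (z - xb))) ->
  K `<=` contingent S xb.
Proof.
move=> d00 cK H k Kk.
have k1 : 0 < `|k| + 1 by rewrite ltr_wpDl.
apply: (@seg_tangent _ _ _ _ _ (d0 / (2 * (`|k| + 1)))).
  by rewrite divr_gt0 // mulr_gt0.
move=> t t0 tle; apply/H; rewrite addrAC subrr add0r.
  rewrite normrZ gtr0_norm //.
  apply: (le_lt_trans (y := d0 / (2 * (`|k| + 1)) * (`|k| + 1))).
    apply: ler_pM => //; first exact: ltW.
    by rewrite lerDl.
  rewrite invfM mulrA -mulrA mulVf ?gt_eqF // mulr1.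
  by rewrite ltr_pdivrMr // ltr_pMr // ltr1n.
by apply: cK => //; exact: ltW.
Qed.

Lemma T_sub_K (R : realType) (X : normedModType R) (S K : set X) xb d0 :
  0 < d0 -> is_cone_set K -> closed K ->
  (forall z, `|z - xb| < d0 -> (S z <-> K (z - xb))) ->
  contingent S xb `<=` K.
Proof.
move=> d00 cK clK H v [vn [tn [vnv [tn0 [tnp Sn]]]]].
have v1 : 0 < `|v| + 1 by rewrite ltr_wpDl.
apply: (@closed_cvg _ _ \oo _ vn K clK _ v vnv).
near=> n.
have tpos := tnp n.
have Hk : K (tn n *: vn n).
  have E : forall a b : X, a + b - a = b by move=> a b; rewrite addrC addKr.
  have := Sn n; move/H; rewrite E; apply.
  rewrite normrZ gtr0_norm //.
  apply: (le_lt_trans (y := tn n * (`|v| + 1))).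
    rewrite ler_pM2l //.
    have : `|v - vn n| < 1 by near: n; exact: cvgr_dist_lt.
    move=> h; rewrite -lerBlDl; apply: (le_trans (lerB_dist _ _)).
    by rewrite ltW // distrC.
  rewrite -ltr_pdivlMr //.
  have : `|0 - tn n| < d0 / (`|v| + 1).
    by near: n; apply: cvgr_dist_lt => //; rewrite divr_gt0.
  by rewrite sub0r normrN gtr0_norm.
have := cK (tn n)^-1 _ _ Hk; rewrite scalerA mulVf ?gt_eqF // scale1r; apply.
by rewrite invr_ge0 ltW.
Unshelve. all: by end_near.
Qed.

Local Open Scope ereal_scope.
Lemma edist_le (R : realType) (X : normedModType R) (C : set X) x c :
  C c -> Defs.edist x C <= (`|x - c|)%:E.
Proof. by move=> Cc; apply: ereal_inf_lbound; exists c. Qed.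

Lemma edist_ge0 (R : realType) (X : normedModType R) (C : set X) x :
  0 <= Defs.edist x C.
Proof. by apply: le_ereal_inf_tmp => _ [c _ <-]; rewrite lee_fin. Qed.

Lemma edist_lt (R : realType) (X : normedModType R) (C : set X) x (r : R) :
  Defs.edist x C < r%:E -> exists2 c, C c & (`|x - c| < r)%R.
Proof. by move/ereal_inf_lt => [_ [c Cc <-]]; rewrite lte_fin => h; exists c. Qed.

Lemma comb (R : realType) (X Y : normedModType R) (C : set Y) (D : set X)
  (p : Y) (q : X) (e : \bar R) (t : R) : (0 < t)%R ->
  (forall c d, C c -> D d -> e <= (t * (`|p - c| + `|q - d|))%:E) ->
  e <= t%:E * (Defs.edist p C + Defs.edist q D).
Proof.
move=> t0 H.
have := @edist_ge0 _ _ C p; have := @edist_lt _ _ C p.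
have := @edist_ge0 _ _ D q; have := @edist_lt _ _ D q.
case: (Defs.edist q D) => [r2||] // H2 _; case: (Defs.edist p C) => [r1||] // H1 _;
  last first.
- by rewrite addye // mulry gtr0_sg // mul1e leey.
- by rewrite addey // mulry gtr0_sg // mul1e leey.
- by rewrite addye // mulry gtr0_sg // mul1e leey.
apply/lee_addgt0Pr => eps eps0.
have e0 : (0 < eps / (2 * t))%R by rewrite divr_gt0 // mulr_gt0.
have /H1 [c Cc hc] : r1%:E < (r1 + eps / (2 * t))%:E by rewrite lte_fin ltrDl.
have /H2 [d Dd hd] : r2%:E < (r2 + eps / (2 * t))%:E by rewrite lte_fin ltrDl.
apply: (le_trans (H c d Cc Dd)).
have -> : t%:E * (r1%:E + r2%:E) + eps%:E = (t * (r1 + r2) + eps)%:E by [].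
rewrite lee_fin.
apply: (le_trans (y := (t * (r1 + eps / (2 * t) + (r2 + eps / (2 * t))))%R)).
  by rewrite ler_pM2l // lerD // ltW.
rewrite le_eqVlt; apply/orP; left; apply/eqP.
by field; rewrite gt_eqF.
Qed.

Local Close Scope ereal_scope.
Lemma zmod_aux (X : zmodType) (u v w0 : X) : u - w0 - (u - (w0 + v)) = v.
Proof. by rewrite opprB addrC addrA subrK addrC addKr. Qed.

Lemma dir2 (R : realType) (X Y : normedModType R) (F : X -> set Y) (A : set X)
  (yb : Y) (xb : X) (K : set X) (d0 eta eta' : R) :
  (0 < d0)%R -> is_cone_set K -> closed K ->
  (forall z, (`|z - xb| < d0)%R -> ([set x | F x yb /\ A x] z <-> K (z - xb))) ->
  convex_set (gph F) -> convex_set A -> F xb yb /\ A xb ->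
  (0 < eta')%R -> (eta' < eta)%R ->
  (forall η1 η2 : R, (0 <= η1)%R -> (0 <= η2)%R -> (η1 + η2 < eta)%R ->
      DFinv F yb xb (cball0 η1) `&` minksum (contingent A xb) (cball0 η2)
      `<=` minksum (contingent [set x | F x yb /\ A x] xb) (cball0 1)) ->
  forall x, (`|x - xb| < d0 / 2)%R ->
  (Defs.edist x [set x | F x yb /\ A x] <=
    (eta'^-1)%:E * (Defs.edist yb (F x) + Defs.edist x A))%E.
Proof.
move=> d00 cK clK H cF cA xbS e0 ee' cond x hx.
set S := [set x | F x yb /\ A x].
apply: comb => [|y a Fy Aa]; first by rewrite invr_gt0.
set r := (`|yb - y| + `|x - a|)%R.
have r0 : (0 <= r)%R by rewrite addr_ge0.
case: (leP (`|x - xb|) (eta'^-1 * r)%R) => hle.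
  by apply: le_trans (@edist_le _ _ S x xb xbS) _; rewrite lee_fin.
case: (eqVneq r 0%R) => [r00 | rn0].
  move: r00; move/eqP; rewrite paddr_eq0 // !normr_eq0 !subr_eq0.
  move=> /andP [/eqP eyb /eqP exa].
  have Sx : S x by split; [rewrite eyb | rewrite exa].
  by apply: le_trans (@edist_le _ _ S x x Sx) _; rewrite subrr normr0 lee_fin mulr_ge0 // invr_ge0 ltW.
have rpos : (0 < r)%R by rewrite lt_neqAle eq_sym rn0.
set s := (eta' / r)%R.
have spos : (0 < s)%R by rewrite divr_gt0.
have HD : DFinv F yb xb (cball0 (s * `|y - yb|)) (s *: (x - xb)).
  exists (s *: (y - yb)); split.
    by rewrite /cball0 /= normrZ gtr0_norm.
  have := @conv_tangent _ _ (gph F) (xb, yb) (x, y) s cF xbS.1 Fy spos.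
  by [].
have HM : minksum (contingent A xb) (cball0 (s * `|x - a|)) (s *: (x - xb)).
  exists (s *: (a - xb)), (s *: (x - a)); split.
    exact: (@conv_tangent _ _ A xb a s cA xbS.2 Aa spos).
  split; first by rewrite /cball0 /= normrZ gtr0_norm.
  by rewrite -scalerDr [a - xb + _]addrC addrA subrK.
have := cond (s * `|y - yb|) (s * `|x - a|) _ _ _ (s *: (x - xb)) (conj HD HM).
have -> : (s * `|y - yb| + s * `|x - a| = eta')%R.
  by rewrite -mulrDr distrC /s -/r mulfVK // gt_eqF.
move=> /(_ (mulr_ge0 (ltW spos) (normr_ge0 _)) (mulr_ge0 (ltW spos) (normr_ge0 _)) ee').
move=> [w [b [Tw [bb E]]]].
have Kw := @T_sub_K _ _ _ _ _ _ d00 cK clK H _ Tw.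
have sinv : (s^-1 = eta'^-1 * r)%R by rewrite /s invf_div mulrC.
have xp : (x - (xb + s^-1 *: w) = s^-1 *: b)%R.
  apply: (@scalerI _ _ s); first by rewrite gt_eqF.
  rewrite scalerA mulfV ?gt_eqF // scale1r scalerBr scalerDr scalerA mulfV ?gt_eqF //.
  by rewrite scale1r opprD addrA -scalerBr E [w + b]addrC addrK.
have ew : (s^-1 *: w = (x - xb) - s^-1 *: b)%R by rewrite -xp zmod_aux.
have sip : (0 < s^-1)%R by rewrite invr_gt0.
have bnorm : (`|s^-1 *: b| <= s^-1)%R.
  by rewrite normrZ gtr0_norm //; apply: ler_piMr; [exact: ltW | exact: bb].
have hw : (`|s^-1 *: w| < d0)%R.
  have h1 := ler_normB (x - xb) (s^-1 *: b).
  rewrite -ew in h1.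
  have h3 : (s^-1 < `|x - xb|)%R by rewrite sinv.
  lra.
have Sp : S (xb + s^-1 *: w).
  have := H (xb + s^-1 *: w); rewrite addrC addKr => /(_ hw) HH.
  apply: (proj2 HH); apply: cK => //; exact: ltW.
apply: le_trans (@edist_le _ _ S x _ Sp) _.
by rewrite xp lee_fin -sinv.
Qed.

Lemma seg_convex (R : realType) (M : normedModType R)
  (C : set (convex_lmodType M)) (c0 v : M) (t1 t : R) :
  convex_set C -> C c0 -> C (c0 + t1 *: v) -> 0 < t -> t <= t1 -> C (c0 + t *: v).
Proof.
move=> cC Cc0 Cc t0 tt1.
have t10 : 0 < t1 by apply: lt_le_trans tt1.
have l0 : 0 <= t / t1 by rewrite divr_ge0 // ltW.
have l1 : t / t1 <= 1 by rewrite ler_pdivrMr // mul1r.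
have := cC _ _ (Itv01 l0 l1) (mem_set Cc) (mem_set Cc0).
rewrite inE.
suff -> : conv (Itv01 l0 l1) ((c0 + t1 *: v) : convex_lmodType M) (c0 : convex_lmodType M) = c0 + t *: v :> M by [].
rewrite /conv /= /unstable.onem scalerDr scalerA mulfVK ?gt_eqF // scalerBl scale1r.
by rewrite addrAC [_ *: c0 + (c0 - _)]addrC subrK.
Qed.

Lemma zmod_aux3 (X : zmodType) (a w b w2 : X) : a - w2 = a - (w + b) + b + (w - w2).
Proof. by rewrite opprD addrA [a + (- w - b)]addrA !subrK. Qed.

Lemma zmod_aux2 (X : zmodType) (a b q : X) : a + b - q = b - (q - a).
Proof. by rewrite opprB addrCA addrA. Qed.

Lemma dir1 (R : realType) (X Y : normedModType R) (F : X -> set Y) (A : set X)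
  (yb : Y) (xb : X) (K : set X) (d0 tau delta eta : R) :
  0 < d0 -> is_cone_set K ->
  (forall z, `|z - xb| < d0 -> ([set x | F x yb /\ A x] z <-> K (z - xb))) ->
  convex_set A -> A xb -> 0 < tau -> 0 < delta ->
  (forall x, `|x - xb| < delta ->
     (Defs.edist x [set x | F x yb /\ A x] <=
       tau%:E * (Defs.edist yb (F x) + Defs.edist x A))%E) ->
  eta * tau <= 1 ->
  forall η1 η2 : R, 0 <= η1 -> 0 <= η2 -> η1 + η2 < eta ->
      DFinv F yb xb (cball0 η1) `&` minksum (contingent A xb) (cball0 η2)
      `<=` minksum (contingent [set x | F x yb /\ A x] xb) (cball0 1).
Proof.
move=> d00 cK H cA Axb tau0 del0 Hsub etle e1 e2 e10 e20 e12.
move=> u [[v [hv Tuv]] [w [b [Tw [hb Eu]]]]].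
set S := [set x | F x yb /\ A x].
move: hv hb; rewrite /cball0 /= => hv hb.
set c := tau * (e1 + e2).
have c1 : c < 1.
  apply: (lt_le_trans (y := tau * eta)); first by rewrite ltr_pM2l.
  by rewrite mulrC.
set eps := (1 - c) / (4 * tau + 2).
have d42 : 0 < 4 * tau + 2 by rewrite addr_gt0 // mulr_gt0.
have eps0 : 0 < eps by rewrite divr_gt0 // subr_gt0.
have epsE : 4 * (tau * eps) + 2 * eps = 1 - c.
  by rewrite /eps; field; rewrite gt_eqF.
have te0 : 0 <= tau * eps by rewrite mulr_ge0 // ltW.
case: Tw => wn [sn [wnw [sn0 [snp Asn]]]].
have : \forall n \near \oo, `|w - wn n| < eps by apply: cvgr_dist_lt.
move=> /filter_ex [n0 hn0].
set w2 := wn n0; set t1 := sn n0.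
have Aseg : forall t, 0 < t -> t <= t1 -> A (xb + t *: w2).
  by move=> t tp tt1; apply: (@seg_convex _ _ A xb w2 t1 t cA Axb (Asn n0) tp tt1).
case: Tuv => pn [tn [pnv [tn0 [tnp Gn]]]].
have u2 : 0 < `|u| + 2 by rewrite ltr_wpDl.
have [n [h1 [h2 [h3 h4]]]] : exists n, `|(u, v) - pn n| < eps /\
   `|0 - tn n| < delta / (`|u| + 2) /\ `|0 - tn n| < d0 / (`|u| + 2) /\
   `|0 - tn n| < t1.
  apply: (@filter_ex _ \oo); near=> n; split; [|split; [|split]].
  - by near: n; apply: cvgr_dist_lt.
  - by near: n; apply: cvgr_dist_lt => //; rewrite divr_gt0.
  - by near: n; apply: cvgr_dist_lt => //; rewrite divr_gt0.
  - by near: n; apply: cvgr_dist_lt => //; apply: snp.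
move: h1 h2 h3 h4; rewrite prod_normE gt_max sub0r normrN gtr0_norm ?tnp //.
move=> /andP [hu hv2] h2 h3 h4.
set t := tn n; set un := (pn n).1; set vn := (pn n).2.
have tp : 0 < t by apply: tnp.
have hu' : `|u - un| < eps by [].
have hv' : `|v - vn| < eps by [].
have Gn' : F (xb + t *: un) (yb + t *: vn) by apply: (Gn n).
set xn := xb + t *: un.
have E1 : forall (a : X) (z : X), a + z - a = z by move=> a z; rewrite addrC addKr.
have E2 : forall (a : Y) (z : Y), a - (a + z) = - z by move=> a z; rewrite opprD addNKr.
have f_un : `|un| <= `|u| + `|u - un|.
  by rewrite -[X in `|X| <= _](@zmod_aux _ u un 0) subr0 add0r ler_normB.
have f_vn : `|vn| <= `|v| + `|v - vn|.
  by rewrite -[X in `|X| <= _](@zmod_aux _ v vn 0) subr0 add0r ler_normB.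
have f_uw : `|un - w2| <= `|un - u| + `|b| + `|w - w2|.
  have -> : un - w2 = (un - u) + b + (w - w2).
    by rewrite Eu -zmod_aux3.
  by apply: (le_trans (ler_normD _ _)); rewrite lerD2r ler_normD.
have hxn : `|xn - xb| = t * `|un| by rewrite /xn E1 normrZ gtr0_norm.
have tu1 : t * `|un| <= t * (`|u| + 1).
  rewrite ler_pM2l //; apply: (le_trans f_un); rewrite lerD2l.
  have c0 : 0 <= c by rewrite mulr_ge0 // ?addr_ge0 // ltW.
  lra.
have tdel : t * (`|u| + 2) < delta by rewrite -ltr_pdivlMr.
have td0 : t * (`|u| + 2) < d0 by rewrite -ltr_pdivlMr.
have xn_del : `|xn - xb| < delta by rewrite hxn; lra.
have Hs := Hsub xn xn_del.
have hA : (Defs.edist xn A <= (t * `|un - w2|)%:E)%E.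
  apply: (le_trans (@edist_le _ _ A xn (xb + t *: w2) (Aseg t tp (ltW h4)))).
  by rewrite lee_fin /xn [xb + t *: un]addrC addrKA -scalerBr normrZ gtr0_norm.
have hF : (Defs.edist yb (F xn) <= (t * `|vn|)%:E)%E.
  apply: (le_trans (@edist_le _ _ (F xn) yb (yb + t *: vn) Gn')).
  by rewrite lee_fin E2 normrN normrZ gtr0_norm.
set Q := tau * (e1 + e2 + 3 * eps) + eps.
have g1 : `|vn| + `|un - w2| <= e1 + e2 + 3 * eps.
  rewrite distrC in hu'; lra.
have hB : (Defs.edist xn S < (t * Q)%:E)%E.
  apply: (le_lt_trans Hs).
  apply: (le_lt_trans (y := (tau * (t * `|vn| + t * `|un - w2|))%:E)).
    rewrite EFinM; apply: lee_wpmul2l; first by rewrite lee_fin ltW.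
    by rewrite EFinD; apply: leeD.
  rewrite lte_fin -mulrDr mulrA [tau * t]mulrC -mulrA /Q ltr_pM2l //.
  have : tau * (`|vn| + `|un - w2|) <= tau * (e1 + e2 + 3 * eps).
    by rewrite ler_pM2l.
  lra.
have [q Sq hq] := @edist_lt _ _ S xn (t * Q) hB.
have cE : c = tau * e1 + tau * e2 by rewrite /c mulrDr.
have QE : Q = tau * e1 + tau * e2 + 3 * (tau * eps) + eps.
  by rewrite /Q !mulrDr mulrCA.
have Q1 : Q <= 1 by lra.
have hq' : `|xn - q| < t.
  apply: (lt_le_trans hq); rewrite -[X in _ <= X]mulr1 ler_pM2l //.
have hqx : `|q - xb| < d0.
  have := ler_distD xn q xb; rewrite distrC in hq'; lra.
have Kq : K (q - xb) := (H q hqx).1 Sq.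
set z := t^-1 *: (q - xb).
have Kz : K z by apply: cK => //; rewrite invr_ge0 ltW.
have Tz := @K_sub_T _ _ _ _ _ _ d00 cK H z Kz.
have exq : xn - q = t *: (un - z).
  by rewrite scalerBr /z scalerA mulfV ?gt_eqF // scale1r /xn zmod_aux2.
have huz : `|un - z| < Q.
  by rewrite -(ltr_pM2l tp) -(gtr0_norm tp) -normrZ -exq (gtr0_norm tp).
exists z, (u - z); split; first exact: Tz.
split; last by rewrite addrC subrK.
rewrite /=; have := ler_distD un u z; lra.
Unshelve. all: by end_near.
Qed.

Local Open Scope ereal_scope.
Lemma sup_ge (R : realType) (S : set (\bar R)) (x : \bar R) :
  (forall r : R, r%:E < x -> exists2 y, S y & r%:E < y) -> x <= ereal_sup S.
Proof.
move=> h; rewrite leNgt; apply/negP => hs.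
move: hs; case Es : (ereal_sup S) => [r| |] hs.
- have [y Sy ry] := h r hs.
  have := ereal_sup_ubound Sy; rewrite Es => yr.
  by move: (lt_le_trans ry yr); rewrite ltxx.
- by move: hs; rewrite ltNge leey.
- have [r hr] : exists r : R, r%:E < x.
    move: hs; case: x {h} => [s||] hs.
    + by exists (s - 1)%R; rewrite lte_fin gtrBl.
    + by exists 0%R; rewrite ltey.
    + by move: hs; rewrite ltxx.
  have [y Sy ry] := h r hr.
  have := ereal_sup_ubound Sy; rewrite Es => yr.
  by move: (lt_le_trans ry yr); rewrite ltNge leNye.
Qed.

Local Close Scope ereal_scope.
Lemma ltinv_mul (R : realType) (η τ : R) : 0 < η -> τ < η^-1 -> η * τ <= 1.
Proof.
move=> η0 h; have : η * τ < η * η^-1 by rewrite ltr_pM2l.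
by rewrite mulfV ?gt_eqF // => /ltW.
Qed.

Lemma final (R : realType) (T E : set R) :
  (forall η η', E η -> 0 < η' -> η' < η -> T η'^-1) ->
  (forall τ η, T τ -> 0 < η -> η * τ <= 1 -> E η) ->
  (forall τ, T τ -> 0 < τ) -> (forall η, E η -> 0 < η) ->
  einv (ereal_inf [set τ%:E | τ in T]) = esup0 [set η%:E | η in E].
Proof.
move=> P1 P2 Tpos Epos.
have Hlb : forall τ, T τ -> (ereal_inf [set τ%:E | τ in T] <= τ%:E)%E.
  by move=> τ Tτ; apply: ereal_inf_lbound; exists τ.
have Hlt : forall r : R, (ereal_inf [set τ%:E | τ in T] < r%:E)%E -> exists2 τ, T τ & τ < r.
  by move=> r /ereal_inf_lt [_ [τ Tτ <-]]; rewrite lte_fin => h; exists τ.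
have Hge : (0 <= ereal_inf [set τ%:E | τ in T])%E.
  by apply: le_ereal_inf_tmp => _ [τ Tτ <-]; rewrite lee_fin ltW // Tpos.
case: (pselect (exists τ, T τ)) => [[τ0 Tτ0] | nT]; last first.
  have -> : [set τ%:E | τ in T] = set0.
    by rewrite -subset0 => ? [τ Tτ _]; apply: nT; exists τ.
  rewrite ereal_inf0 /= /esup0; case: pselect => // h; exfalso; apply: h.
  rewrite -subset0 => ? [η Eη _]; apply: nT; exists (η / 2)^-1.
  have η0 := Epos η Eη.
  by apply: (P1 η); rewrite ?divr_gt0 // ltr_pdivrMr // ltr_pMr // ltr1n.
have τ00 := Tpos τ0 Tτ0.
have Eτ0 : E τ0^-1 by apply: (P2 τ0); rewrite ?invr_gt0 // mulVf // gt_eqF.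
rewrite /esup0; destruct (pselect _) as [h|hn].
  exfalso; have hx : [set η%:E | η in E] (τ0^-1)%:E by exists τ0^-1.
  by rewrite h in hx.
have Hle := Hlb τ0 Tτ0.
move: Hlb Hlt Hge Hle; case: (ereal_inf _) => [s||] Hlb Hlt Hge Hle //.
rewrite [is_left _]/=.
rewrite lee_fin in Hge.
have Emk : forall η, 0 < η -> s < η^-1 -> E η.
  move=> η η0 h; have /Hlt [τ Tτ hτ] : (s%:E < η^-1%:E)%E by rewrite lte_fin.
  by apply: (P2 τ) => //; apply: ltinv_mul.
rewrite /einv; case: eqP => [s0 | sn0].
  apply/eqP; rewrite eq_le leey andbT; apply: sup_ge => r _.
  have p : 0 < `|r| + 1 by rewrite ltr_wpDl.
  exists (`|r| + 1)%:E; first by exists (`|r| + 1) => //; apply: Emk; rewrite ?s0 ?invr_gt0.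
  by rewrite lte_fin; apply: (le_lt_trans (ler_norm r)); rewrite ltrDl.
have s0 : 0 < s by rewrite lt_neqAle eq_sym Hge andbT; apply/eqP.
apply/eqP; rewrite eq_le; apply/andP; split.
  apply: sup_ge => r hr; rewrite lte_fin in hr.
  have si0 : 0 < s^-1 by rewrite invr_gt0.
  have Emk' : forall η, 0 < η -> η < s^-1 -> E η.
    move=> η η0 h; apply: Emk => //.
    by rewrite -(invrK s) ltf_pV2 // posrE ?invr_gt0.
  case: (leP r 0) => hr0.
    exists (s^-1 / 2)%:E; first by exists (s^-1 / 2) => //; apply: Emk'; rewrite ?divr_gt0 // ltr_pdivrMr // ltr_pMr // ltr1n.
    by rewrite lte_fin; apply: (le_lt_trans hr0); rewrite divr_gt0.
  exists ((r + s^-1) / 2)%:E; first by exists ((r + s^-1) / 2) => //; apply: Emk'; [rewrite divr_gt0 // addr_gt0 | lra].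
  rewrite lte_fin; lra.
apply: ge_ereal_sup => _ [η Eη <-]; rewrite lee_fin.
have η0 := Epos η Eη.
rewrite leNgt; apply/negP => hlt.
set η' := (s^-1 + η) / 2.
have si0 : 0 < s^-1 by rewrite invr_gt0.
have h1 : s^-1 < η' by rewrite /η'; lra.
have h2 : η' < η by rewrite /η'; lra.
have η'0 : 0 < η' by lra.
have := Hlb _ (P1 η η' Eη η'0 h2); rewrite lee_fin.
rewrite -div1r ler_pdivlMr // => h3.
have : η' <= 1 / s by rewrite ler_pdivlMr // mulrC.
rewrite div1r; lra.
Qed.

Theorem theorem3p2 (R : realType) (X Y : completeNormedModType R)
  (F : X -> set Y) (A : set X) (yb : Y) (xb : X)
  (F_closed : closed (gph F)) (F_convex : convex_set (gph F))
  (A_closed : closed A) (A_convex : convex_set A)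
  (xbS : F xb yb /\ A xb)
  (K : set X) (V : set X)
  (K_closed : closed K) (K_convex : convex_set K) (K_cone : is_cone_set K)
  (V_nbhs : nbhs xb V)
  (HSK : [set x | F x yb /\ A x] `&` V = [set xb + k | k in K] `&` V) :
  einv (subreg F A xb yb) =
  esup0 [set η%:E | η in [set η : R | 0 < η /\
    forall η1 η2 : R, 0 <= η1 -> 0 <= η2 -> η1 + η2 < η ->
      DFinv F yb xb (cball0 η1) `&` minksum (contingent A xb) (cball0 η2)
      `<=` minksum (contingent [set x | F x yb /\ A x] xb) (cball0 1)]].
Proof.
have /nbhs_ballP [d0 d00 hball] := V_nbhs.
have H : forall z, `|z - xb| < d0 -> ([set x | F x yb /\ A x] z <-> K (z - xb)).
  move=> z hz; have Vz : V z by apply: hball; rewrite -ball_normE /ball_ /= distrC.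
  split => [Sz | Kz].
  - have : ([set xb + k | k in K] `&` V) z by rewrite -HSK.
    by move=> [[k Kk <-] _]; rewrite addrC addKr.
  - have : ([set x | F x yb /\ A x] `&` V) z.
      by rewrite HSK; split => //; exists (z - xb) => //; rewrite addrC subrK.
    by case.
set Tset := [set τ : R | 0 < τ /\
     exists δ : R, 0 < δ /\ forall x, `|x - xb| < δ ->
       (Defs.edist x [set x | F x yb /\ A x] <= τ%:E * (Defs.edist yb (F x) + Defs.edist x A))%E].
set E := [set η : R | 0 < η /\
    forall η1 η2 : R, 0 <= η1 -> 0 <= η2 -> η1 + η2 < η ->
      DFinv F yb xb (cball0 η1) `&` minksum (contingent A xb) (cball0 η2)
      `<=` minksum (contingent [set x | F x yb /\ A x] xb) (cball0 1)].
have P1 : forall η η', E η -> 0 < η' -> η' < η -> Tset η'^-1.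
  move=> η η' [η0 cond] h0 h1; split; first by rewrite invr_gt0.
  exists (d0 / 2); split; first by rewrite divr_gt0.
  move=> x hx.
  exact: (@dir2 _ _ _ F A yb xb K d0 η η' d00 K_cone K_closed H F_convex A_convex xbS h0 h1 cond x hx).
have P2 : forall τ η, Tset τ -> 0 < η -> η * τ <= 1 -> E η.
  move=> τ η [τ0 [δ [δ0 hδ]]] η0 ητ; split => //.
  exact: (@dir1 _ _ _ F A yb xb K d0 τ δ η d00 K_cone H A_convex xbS.2 τ0 δ0 hδ ητ).
rewrite /subreg -/Tset -/E.
apply: final => //; [by move=> τ [] | by move=> η []].
Qed.
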